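(* Fix $N\ge1$, $B>0$, $a_{\max}>0$, and for each $n$: $a_n\ge0$, $\zeta_n\in(0,1]$, $\beta_n\ge0$, integers $\tau_n\ge1$, $D_n\ge1$. Call a pair of vectors $(\mathbf p,\mathbf q)\in[0,1]^N\times[0,1]^N$ admissible if $0\le q_n<p_n\le1$ and $q_n\le a_n/a_{\max}\le p_n$ for all $n$. For admissible $(\mathbf p,\mathbf q)$ let $\phi_I^*(\mathbf p,\mathbf q)=\min_{\lambda\ge0}g_I(\lambda;\mathbf p,\mathbf q)$, where $g_I$ is defined below. Then: (i) for fixed $\mathbf p$, if $(\mathbf p,\mathbf q)$ and $(\mathbf p,\mathbf q')$ are admissible and $\mathbf q\le\mathbf q'$ componentwise, then $\phi_I^*(\mathbf p,\mathbf q)\ge\phi_I^*(\mathbf p,\mathbf q')$; (ii) if $(\mathbf p,\mathbf 0)$ and $(\mathbf p',\mathbf 0)$ are admissible and $\mathbf p\le\mathbf p'$ componentwise, then $\phi_I^*(\mathbf p,\mathbf 0)\le\phi_I^*(\mathbf p',\mathbf 0)$.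
   Context: Put $\tilde a_n=\frac{a_n-a_{\max}q_n}{p_n-q_n}$. For $\lambda\ge0$ and $n$ with $\zeta_n\beta_n>\lambda$, let $c_n(\lambda)=\frac{\lambda}{(\zeta_n\beta_n-\lambda)(1-\zeta_n)^{\tau_n}+\lambda}$ and $v_n(\lambda)=p_n\frac{1-(1-\zeta_n)^{\tau_n}}{\zeta_n}(\zeta_n\beta_n-\lambda)$ if $p_n\le c_n(\lambda)$, and $v_n(\lambda)=-(1-p_n)\frac{1-(1-\zeta_n)^{D_n}}{\zeta_n}\lambda+p_n\frac{1-(1-\zeta_n)^{\tau_n+D_n}}{\zeta_n}(\zeta_n\beta_n-\lambda)$ if $p_n>c_n(\lambda)$. Define $g_I(\lambda;\mathbf p,\mathbf q)=\lambda B+\sum_{n:\ \zeta_n\beta_n>\lambda}\big[\tilde a_n v_n(\lambda)+(a_{\max}-\tilde a_n)q_n\frac{1-(1-\zeta_n)^{\tau_n}}{\zeta_n}(\zeta_n\beta_n-\lambda)\big]$. This is the Lagrange dual function of the weighted timely-throughput problem with static channels, binary resource levels and imperfect prediction with true-positive rates $\mathbf p$ and false-negative rates $\mathbf q$; $\phi_I^*$ is the optimal weighted timely-throughput. *)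

(* Defs.v *)
From Stdlib Require Import Reals Lra ClassicalEpsilon.
Open Scope R_scope.

Fixpoint sumN (N : nat) (f : nat -> R) : R :=
  match N with
  | O => 0
  | S k => sumN k f + f k
  end.

Definition geo (z : R) (k : nat) : R := (1 - (1 - z) ^ k) / z.

Section Model.
Variables (B amax : R) (a zeta beta : nat -> R) (tau D : nat -> nat).

Definition atilde (p q : nat -> R) (n : nat) : R :=
  (a n - amax * q n) / (p n - q n).

Definition c_thr (lam : R) (n : nat) : R :=
  lam / ((zeta n * beta n - lam) * (1 - zeta n) ^ (tau n) + lam).

Definition v_term (lam : R) (p : nat -> R) (n : nat) : R :=
  if Rle_dec (p n) (c_thr lam n) then
    p n * geo (zeta n) (tau n) * (zeta n * beta n - lam)
  else
    - (1 - p n) * geo (zeta n) (D n) * lam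
    + p n * geo (zeta n) (tau n + D n) * (zeta n * beta n - lam).

Definition g_I (N : nat) (lam : R) (p q : nat -> R) : R :=
  lam * B + sumN N (fun n =>
    if Rlt_dec lam (zeta n * beta n) then
      atilde p q n * v_term lam p n
      + (amax - atilde p q n) * q n * geo (zeta n) (tau n) * (zeta n * beta n - lam)
    else 0).

Definition is_minimizer (N : nat) (p q : nat -> R) (lam0 : R) : Prop :=
  0 <= lam0 /\ forall lam, 0 <= lam -> g_I N lam0 p q <= g_I N lam p q.

Definition phi_I (N : nat) (p q : nat -> R) : R :=
  g_I N (epsilon (inhabits 0) (is_minimizer N p q)) p q.

Definition admissible (N : nat) (p q : nat -> R) : Prop :=
  forall n, (n < N)%nat ->
    0 <= q n /\ q n < p n /\ p n <= 1 /\ q n <= a n / amax /\ a n / amax <= p n.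
End Model.

(* Main.v *)
Require Import Defs.
From Stdlib Require Import Reals Lra Psatz ClassicalEpsilon.
Open Scope R_scope.
From Stdlib Require Import FunctionalExtensionality.

Lemma geo_nonneg z k : 0 < z <= 1 -> 0 <= geo z k.
Proof.
  intros Hz. unfold geo. apply Rmult_le_pos; [|left; apply Rinv_0_lt_compat; lra].
  assert ((1 - z) ^ k <= 1 ^ k) by (apply pow_incr; lra).
  rewrite pow1 in H. lra.
Qed.

Lemma geo_add z t d : z <> 0 -> geo z (t + d) = geo z t + (1 - z) ^ t * geo z d.
Proof. intros Hz. unfold geo. rewrite pow_add. field. auto. Qed.

Lemma pow_nonneg' z k : 0 < z <= 1 -> 0 <= (1 - z) ^ k.
Proof. intros. apply pow_le. lra. Qed.

Definition V1 (zeta beta : nat -> R) (tau : nat -> nat) (lam : R) (p : nat -> R) n :=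
  p n * geo (zeta n) (tau n) * (zeta n * beta n - lam).
Definition V2 (zeta beta : nat -> R) (tau D : nat -> nat) (lam : R) (p : nat -> R) n :=
  - (1 - p n) * geo (zeta n) (D n) * lam
    + p n * geo (zeta n) (tau n + D n) * (zeta n * beta n - lam).

Lemma vterm_eq zeta beta tau D lam p n :
  0 < zeta n <= 1 -> 0 < p n <= 1 -> 0 <= lam < zeta n * beta n ->
  v_term zeta beta tau D lam p n = Rmax (V1 zeta beta tau lam p n) (V2 zeta beta tau D lam p n).
Proof.
  intros Hz Hp Hl. unfold v_term, V1, V2, c_thr.
  set (E := (1 - zeta n) ^ tau n).
  assert (HE : 0 <= E) by (apply pow_nonneg'; auto).
  set (den := (zeta n * beta n - lam) * E + lam).
  assert (Hden : 0 <= den) by (unfold den; nra).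
  assert (Hgd := geo_nonneg (zeta n) (D n) Hz).
  assert (Hid : - (1 - p n) * geo (zeta n) (D n) * lam
    + p n * geo (zeta n) (tau n + D n) * (zeta n * beta n - lam)
    - p n * geo (zeta n) (tau n) * (zeta n * beta n - lam)
    = geo (zeta n) (D n) * (p n * den - lam)).
  { rewrite geo_add by lra. unfold den, E. ring. }
  destruct (Rle_dec (p n) (lam / den)) as [H|H].
  - destruct (Req_dec den 0) as [H0|H0].
    + rewrite H0 in H. unfold Rdiv in H. rewrite Rinv_0 in H. lra.
    + assert (p n * den <= lam).
      { apply Rmult_le_compat_r with (r := den) in H; [|lra].
        unfold Rdiv in H. rewrite Rmult_assoc, Rinv_l in H by auto. lra. }
      rewrite Rmax_left; auto. nra.
  - destruct (Req_dec den 0) as [H0|H0].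
    + assert (lam = 0) by (unfold den in H0; nra).
      rewrite Rmax_right; auto. rewrite H0 in Hid. nra.
    + assert (p n * den > lam).
      { apply Rnot_le_lt in H.
        apply Rmult_lt_compat_r with (r := den) in H; [|lra].
        unfold Rdiv in H. rewrite Rmult_assoc, Rinv_l in H by auto. lra. }
      rewrite Rmax_right; auto. nra.
Qed.
Definition mx (x y : R) := (x + y + Rabs (x - y)) / 2.
Lemma mx_Rmax x y : mx x y = Rmax x y.
Proof. unfold mx, Rmax. destruct (Rle_dec x y); [rewrite Rabs_left1|rewrite Rabs_right]; lra. Qed.
Lemma cont_const c : continuity (fun _ => c).
Proof. apply continuity_const. intros ? ?; reflexivity. Qed.
Lemma cont_mx f g : continuity f -> continuity g -> continuity (fun x => mx (f x) (g x)).
Proof.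
  intros Hf Hg. unfold mx.
  exact (continuity_mult (fun x => f x + g x + Rabs (f x - g x)) (fun _ => /2)
    (continuity_plus (fun x => f x + g x) (fun x => Rabs (f x - g x))
       (continuity_plus f g Hf Hg)
       (continuity_comp (fun x => f x - g x) Rabs (continuity_minus f g Hf Hg) Rcontinuity_abs))
    (cont_const _)).
Qed.
Lemma cont_lin (c d : R) : continuity (fun x => c + d * x).
Proof.
  exact (continuity_plus (fun _ => c) (fun x => d * x) (cont_const c)
     (continuity_scal _ d (derivable_continuous _ derivable_id))).
Qed.

Lemma cont_eq f g : (forall x, f x = g x) -> continuity g -> continuity f.
Proof. intros H Hg. replace f with g; auto. apply functional_extensionality; intros; auto. Qed.

Definition Sterm (A C z b P G GD GTD : R) (lam : R) :=
  A * mx (mx (P * G * (z * b - lam)) (- (1 - P) * GD * lam + P * GTD * (z * b - lam))) 0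
  + C * mx (z * b - lam) 0.

Lemma Sterm_cont A C z b P G GD GTD : continuity (Sterm A C z b P G GD GTD).
Proof.
  unfold Sterm.
  apply (continuity_plus (fun lam => A * mx (mx (P * G * (z * b - lam)) (- (1 - P) * GD * lam + P * GTD * (z * b - lam))) 0) (fun lam => C * mx (z * b - lam) 0)).
  - apply (continuity_scal (fun lam => mx (mx (P * G * (z * b - lam)) (- (1 - P) * GD * lam + P * GTD * (z * b - lam))) 0)).
    apply (cont_mx (fun lam => mx (P * G * (z * b - lam)) (- (1 - P) * GD * lam + P * GTD * (z * b - lam))) (fun _ => 0)); [|apply cont_const].
    apply cont_mx.
    + apply cont_eq with (g := fun x => P*G*(z*b) + (-(P*G)) * x); [intros; ring|apply cont_lin].
    + apply cont_eq with (g := fun x => P*GTD*(z*b) + (-(1-P)*GD - P*GTD) * x); [intros; ring|apply cont_lin].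
  - apply (continuity_scal (fun lam => mx (z * b - lam) 0)).
    apply (cont_mx (fun lam => z * b - lam) (fun _ => 0)); [|apply cont_const].
    apply cont_eq with (g := fun x => z*b + (-1) * x); [intros; ring|apply cont_lin].
Qed.

Lemma sumN_cont N (h : nat -> R -> R) : (forall n, continuity (h n)) ->
  continuity (fun x => sumN N (fun n => h n x)).
Proof.
  intros H. induction N; simpl.
  - apply cont_const.
  - apply (continuity_plus (fun x => sumN N (fun n => h n x)) (h N)); auto.
Qed.

Lemma sumN_ext N f g : (forall n, (n < N)%nat -> f n = g n) -> sumN N f = sumN N g.
Proof. induction N; simpl; intros; auto. rewrite IHN, H; auto. Qed.

Lemma sumN_le N f g : (forall n, (n < N)%nat -> f n <= g n) -> sumN N f <= sumN N g.
Proof. induction N; simpl; intros; [lra|]. apply Rplus_le_compat; auto. Qed.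

Lemma sumN_ge_term N f : (forall n, (n < N)%nat -> 0 <= f n) ->
  forall k, (k < N)%nat -> f k <= sumN N f.
Proof.
  induction N; simpl; intros H k Hk; [lia|].
  assert (0 <= sumN N f) by (apply Rle_trans with (sumN N (fun _ => 0)); [ clear; induction N; simpl; lra | apply sumN_le; intros; apply H; lia]).
  destruct (Nat.eq_dec k N).
  - subst. lra.
  - assert (f k <= sumN N f) by (apply IHN; auto; lia). assert (0 <= f N) by auto. lra.
Qed.

Lemma summand_eq amax a zeta beta tau D lam p q n :
  0 < zeta n <= 1 -> 0 < p n <= 1 -> 0 <= lam ->
  (if Rlt_dec lam (zeta n * beta n) then
     atilde amax a p q n * v_term zeta beta tau D lam p n
     + (amax - atilde amax a p q n) * q n * geo (zeta n) (tau n) * (zeta n * beta n - lam)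
   else 0)
  = Sterm (atilde amax a p q n) ((amax - atilde amax a p q n) * q n * geo (zeta n) (tau n))
      (zeta n) (beta n) (p n) (geo (zeta n) (tau n)) (geo (zeta n) (D n))
      (geo (zeta n) (tau n + D n)) lam.
Proof.
  intros Hz Hp Hl. unfold Sterm. rewrite !mx_Rmax.
  assert (G1 := geo_nonneg (zeta n) (tau n) Hz).
  assert (G2 := geo_nonneg (zeta n) (D n) Hz).
  assert (G3 := geo_nonneg (zeta n) (tau n + D n) Hz).
  destruct (Rlt_dec lam (zeta n * beta n)) as [H|H].
  - rewrite vterm_eq by (auto; lra). unfold V1, V2.
    rewrite (Rmax_left (zeta n * beta n - lam) 0) by lra.
    rewrite (Rmax_left (Rmax _ _) 0).
    + ring.
    + eapply Rle_trans; [|apply Rmax_l]. apply Rmult_le_pos; [|lra].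
      apply Rmult_le_pos; lra.
  - rewrite (Rmax_right (zeta n * beta n - lam) 0) by lra.
    rewrite (Rmax_right (Rmax _ _) 0).
    + ring.
    + apply Rmax_lub.
      * assert (0 <= p n * geo (zeta n) (tau n)) by (apply Rmult_le_pos; lra). nra.
      * assert (0 <= p n * geo (zeta n) (tau n + D n)) by (apply Rmult_le_pos; lra).
        assert (0 <= (1 - p n) * geo (zeta n) (D n)) by (apply Rmult_le_pos; lra). nra.
Qed.

Definition Ffun B amax a zeta beta tau D N (p q : nat -> R) lam :=
  lam * B + sumN N (fun n => Sterm (atilde amax a p q n)
      ((amax - atilde amax a p q n) * q n * geo (zeta n) (tau n))
      (zeta n) (beta n) (p n) (geo (zeta n) (tau n)) (geo (zeta n) (D n))
      (geo (zeta n) (tau n + D n)) lam).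

Lemma g_eq_F B amax a zeta beta tau D N p q lam :
  (forall n, (n < N)%nat -> 0 < zeta n <= 1 /\ 0 < p n <= 1) -> 0 <= lam ->
  g_I B amax a zeta beta tau D N lam p q = Ffun B amax a zeta beta tau D N p q lam.
Proof.
  intros H Hl. unfold g_I, Ffun. f_equal. apply sumN_ext. intros n Hn.
  destruct (H n Hn). apply summand_eq; auto.
Qed.

Lemma Ffun_cont B amax a zeta beta tau D N p q : continuity (Ffun B amax a zeta beta tau D N p q).
Proof.
  unfold Ffun.
  apply (continuity_plus (fun lam => lam * B)).
  - apply cont_eq with (g := fun x => 0 + B * x); [intros; ring|apply cont_lin].
  - apply (sumN_cont N (fun n lam => Sterm (atilde amax a p q n)
      ((amax - atilde amax a p q n) * q n * geo (zeta n) (tau n))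
      (zeta n) (beta n) (p n) (geo (zeta n) (tau n)) (geo (zeta n) (D n))
      (geo (zeta n) (tau n + D n)) lam)).
    intros; apply Sterm_cont.
Qed.

Lemma g_big B amax a zeta beta tau D N p q lam :
  (forall n, (n < N)%nat -> zeta n * beta n <= lam) ->
  g_I B amax a zeta beta tau D N lam p q = lam * B.
Proof.
  intros H. unfold g_I. rewrite (sumN_ext N _ (fun _ => 0)).
  - clear. induction N; simpl; lra.
  - intros n Hn. destruct (Rlt_dec lam (zeta n * beta n)); auto. specialize (H n Hn). lra.
Qed.

Lemma minimizer_exists B amax a zeta beta tau D N p q :
  0 < B ->
  (forall n, (n < N)%nat -> 0 < zeta n <= 1 /\ 0 < p n <= 1) ->
  exists l, is_minimizer B amax a zeta beta tau D N p q l.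
Proof.
  intros HB H.
  set (M := sumN N (fun n => Rabs (zeta n * beta n))).
  assert (HM : forall n, (n < N)%nat -> zeta n * beta n <= M).
  { intros n Hn. eapply Rle_trans; [apply RRle_abs|].
    apply (sumN_ge_term N (fun k => Rabs (zeta k * beta k))); auto. intros; apply Rabs_pos. }
  assert (HM0 : 0 <= M).
  { unfold M. apply Rle_trans with (sumN N (fun _ => 0)); [clear; induction N; simpl; lra|].
    apply sumN_le. intros; apply Rabs_pos. }
  destruct (continuity_ab_min (Ffun B amax a zeta beta tau D N p q) 0 M HM0
     (fun c _ => Ffun_cont B amax a zeta beta tau D N p q c)) as [l0 [Hmin Hl0]].
  exists l0. split; [lra|]. intros lam Hlam.
  rewrite g_eq_F by (auto; lra).
  destruct (Rle_dec lam M) as [HlM|HlM].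
  - rewrite g_eq_F by auto. apply Hmin. lra.
  - rewrite g_big by (intros n Hn; specialize (HM n Hn); lra).
    apply Rle_trans with (Ffun B amax a zeta beta tau D N p q M); [apply Hmin; lra|].
    rewrite <- g_eq_F by (auto; lra). rewrite g_big by auto. nra.
Qed.

Lemma phi_min B amax a zeta beta tau D N p q :
  0 < B ->
  (forall n, (n < N)%nat -> 0 < zeta n <= 1 /\ 0 < p n <= 1) ->
  is_minimizer B amax a zeta beta tau D N p q (epsilon (inhabits 0) (is_minimizer B amax a zeta beta tau D N p q)).
Proof. intros. apply epsilon_spec. apply minimizer_exists; auto. Qed.

Lemma phi_compare B amax a zeta beta tau D N p q p' q' :
  0 < B ->
  (forall n, (n < N)%nat -> 0 < zeta n <= 1 /\ 0 < p n <= 1) ->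
  (forall n, (n < N)%nat -> 0 < zeta n <= 1 /\ 0 < p' n <= 1) ->
  (forall lam, 0 <= lam -> g_I B amax a zeta beta tau D N lam p' q' <= g_I B amax a zeta beta tau D N lam p q) ->
  phi_I B amax a zeta beta tau D N p' q' <= phi_I B amax a zeta beta tau D N p q.
Proof.
  intros HB H1 H2 Hg. unfold phi_I.
  destruct (phi_min B amax a zeta beta tau D N p q HB H1) as [Hx Hxm].
  destruct (phi_min B amax a zeta beta tau D N p' q' HB H2) as [Hy Hym].
  eapply Rle_trans; [apply Hym; apply Hx|]. apply Hg; auto.
Qed.

Lemma cmp_q amax a P q q' v G X : 0 < amax -> 0 <= q <= q' -> q' < P -> a <= amax * P ->
  P * G * X <= v ->
  (a - amax*q')/(P - q') * v + (amax - (a - amax*q')/(P-q')) * q' * G * X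
  <= (a - amax*q)/(P-q) * v + (amax - (a - amax*q)/(P-q)) * q * G * X.
Proof.
  intros Ham Hq HqP Ha Hv.
  set (k := amax * P - a). set (dd := v - P * G * X).
  assert (e1 : (a - amax*q)/(P-q) * v + (amax - (a - amax*q)/(P-q)) * q * G * X
               = amax * v - k * (G * X) - k * dd * / (P - q)) by (unfold k, dd; field; lra).
  assert (e2 : (a - amax*q')/(P-q') * v + (amax - (a - amax*q')/(P-q')) * q' * G * X
               = amax * v - k * (G * X) - k * dd * / (P - q')) by (unfold k, dd; field; lra).
  rewrite e1, e2.
  assert (/ (P - q) <= / (P - q')) by (apply Rinv_le_contravar; lra).
  assert (0 <= k * dd) by (unfold k, dd; apply Rmult_le_pos; lra).
  assert (k * dd * / (P - q) <= k * dd * / (P - q')) by (apply Rmult_le_compat_l; auto).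
  lra.
Qed.

Lemma cmp_p amax a P P' G GD GT X lam : 0 <= a -> 0 < P <= P' -> 0 <= G -> 0 <= GD -> 0 <= lam ->
  (a - amax*0)/(P - 0) * Rmax (P*G*X) (-(1-P)*GD*lam + P*GT*X)
    + (amax - (a - amax*0)/(P-0)) * 0 * G * X
  <= (a - amax*0)/(P' - 0) * Rmax (P'*G*X) (-(1-P')*GD*lam + P'*GT*X)
    + (amax - (a - amax*0)/(P'-0)) * 0 * G * X.
Proof.
  intros Ha HP HG HGD Hl.
  set (r := (a - amax*0)/(P - 0)). set (r' := (a - amax*0)/(P' - 0)).
  assert (Hr : 0 <= r') by (unfold r'; unfold Rdiv; apply Rmult_le_pos; [lra|left; apply Rinv_0_lt_compat; lra]).
  assert (Hr0 : 0 <= r) by (unfold r; unfold Rdiv; apply Rmult_le_pos; [lra|left; apply Rinv_0_lt_compat; lra]).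
  assert (e1 : r * (P*G*X) = a*G*X) by (unfold r; field; lra).
  assert (e1' : r' * (P'*G*X) = a*G*X) by (unfold r'; field; lra).
  assert (e2 : r * (-(1-P)*GD*lam + P*GT*X) = - (a*GD*lam) * / P + a*GD*lam + a*GT*X) by (unfold r; field; lra).
  assert (e2' : r' * (-(1-P')*GD*lam + P'*GT*X) = - (a*GD*lam) * / P' + a*GD*lam + a*GT*X) by (unfold r'; field; lra).
  assert (/ P' <= / P) by (apply Rinv_le_contravar; lra).
  assert (0 <= a*GD*lam) by (repeat apply Rmult_le_pos; lra).
  assert (a*GD*lam * / P' <= a*GD*lam * / P) by (apply Rmult_le_compat_l; auto).
  assert (Hm1 : r' * (P'*G*X) <= r' * Rmax (P'*G*X) (-(1-P')*GD*lam + P'*GT*X)) by (apply Rmult_le_compat_l; auto; apply Rmax_l).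
  assert (Hm2 : r' * (-(1-P')*GD*lam + P'*GT*X) <= r' * Rmax (P'*G*X) (-(1-P')*GD*lam + P'*GT*X)) by (apply Rmult_le_compat_l; auto; apply Rmax_r).
  replace ((amax - r) * 0 * G * X) with 0 by ring.
  replace ((amax - r') * 0 * G * X) with 0 by ring.
  rewrite !Rplus_0_r.
  destruct (Rle_dec (P*G*X) (-(1-P)*GD*lam + P*GT*X)) as [Hc|Hc].
  - rewrite Rmax_right by auto. lra.
  - rewrite Rmax_left by lra. lra.
Qed.

Theorem theorem5 (N : nat) (B amax : R) (a zeta beta : nat -> R) (tau D : nat -> nat)
  (HN : (1 <= N)%nat) (HB : 0 < B) (Hamax : 0 < amax)
  (Ha : forall n, (n < N)%nat -> 0 <= a n)
  (Hzeta : forall n, (n < N)%nat -> 0 < zeta n <= 1)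
  (Hbeta : forall n, (n < N)%nat -> 0 <= beta n)
  (Htau : forall n, (n < N)%nat -> (1 <= tau n)%nat)
  (HD : forall n, (n < N)%nat -> (1 <= D n)%nat) :
  (forall p q q' : nat -> R,
     admissible amax a N p q -> admissible amax a N p q' ->
     (forall n, (n < N)%nat -> q n <= q' n) ->
     phi_I B amax a zeta beta tau D N p q >= phi_I B amax a zeta beta tau D N p q')
  /\
  (forall p p' : nat -> R,
     admissible amax a N p (fun _ => 0) -> admissible amax a N p' (fun _ => 0) ->
     (forall n, (n < N)%nat -> p n <= p' n) ->
     phi_I B amax a zeta beta tau D N p (fun _ => 0)
       <= phi_I B amax a zeta beta tau D N p' (fun _ => 0)).
Proof.
  assert (Hpos : forall p q, admissible amax a N p q ->
            forall n, (n < N)%nat -> 0 < zeta n <= 1 /\ 0 < p n <= 1).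
  { intros p q Had n Hn. destruct (Had n Hn) as [? [? [? ?]]]. split; auto. lra. }
  split.
  - intros p q q' Hq Hq' Hle. apply Rle_ge.
    apply phi_compare; eauto.
    intros lam Hl. unfold g_I. apply Rplus_le_compat_l. apply sumN_le.
    intros n Hn. destruct (Rlt_dec lam (zeta n * beta n)); [|lra].
    destruct (Hq n Hn) as [h1 [h2 [h3 [h4 h5]]]].
    destruct (Hq' n Hn) as [h1' [h2' [h3' [h4' h5']]]].
    assert (Hz := Hzeta n Hn).
    assert (Hqq : q n <= q' n) by (apply Hle; auto).
    assert (Hap : a n <= amax * p n).
    { apply Rmult_le_compat_l with (r := amax) in h5; [|lra].
      unfold Rdiv in h5. rewrite <- Rmult_assoc, (Rmult_comm amax (a n)), Rmult_assoc, Rinv_r in h5 by lra.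
      lra. }
    assert (Hv : p n * geo (zeta n) (tau n) * (zeta n * beta n - lam) <= v_term zeta beta tau D lam p n).
    { rewrite vterm_eq by (auto; lra). apply Rmax_l. }
    unfold atilde. apply cmp_q; auto; lra.
  - intros p p' Hp Hp' Hle.
    apply phi_compare; eauto.
    intros lam Hl. unfold g_I. apply Rplus_le_compat_l. apply sumN_le.
    intros n Hn. destruct (Rlt_dec lam (zeta n * beta n)); [|lra].
    destruct (Hp n Hn) as [h1 [h2 [h3 [h4 h5]]]].
    destruct (Hp' n Hn) as [h1' [h2' [h3' [h4' h5']]]].
    assert (Hz := Hzeta n Hn).
    unfold atilde. rewrite !vterm_eq by (auto; lra). unfold V1, V2.
    assert (Hpp : p n <= p' n) by (apply Hle; auto).
    assert (G1 := geo_nonneg (zeta n) (tau n) Hz).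
    assert (G2 := geo_nonneg (zeta n) (D n) Hz).
    apply cmp_p; auto; lra.
Qed.
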